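(* Let $\mathbf{X}$ be a signal satisfying $\mathbf{X}=\mathbf{D}_1\boldsymbol{\Gamma}_1$, $\boldsymbol{\Gamma}_1=\mathbf{D}_2\boldsymbol{\Gamma}_2,\dots,\boldsymbol{\Gamma}_{K-1}=\mathbf{D}_K\boldsymbol{\Gamma}_K$, where $\{\mathbf{D}_i\}_{i=1}^K$ are convolutional dictionaries with mutual coherences $\mu(\mathbf{D}_i)$. Suppose that for all $1\le i\le K$, $$\|\boldsymbol{\Gamma}_i\|_{0,\infty}^{s}<\tfrac12\Big(1+\tfrac{1}{\mu(\mathbf{D}_i)}\Big),$$ and that the thresholds $\lambda_i$ satisfy $\|\boldsymbol{\Gamma}_i\|_{0,\infty}^{s}\le \lambda_i<\tfrac12\big(1+\tfrac{1}{\mu(\mathbf{D}_i)}\big)$ for all $1\le i\le K$. Then $\{\boldsymbol{\Gamma}_i\}_{i=1}^K$ is the unique solution of the problem $\mathrm{DCP}_{\boldsymbol\lambda}$ for $\mathbf{X}$.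
   Context: Setting (ML-CSC model). Signals are one-dimensional of length $N$ with periodic (cyclic) boundary conditions. Set $m_0=1$ and $\boldsymbol{\Gamma}_0=\mathbf{X}\in\mathbb{R}^N$. For $i\ge1$, $\boldsymbol{\Gamma}_i\in\mathbb{R}^{Nm_i}$ is indexed so that entry $k m_i+r$ ($0\le k<N$, $0\le r<m_i$) is the coefficient of filter $r$ at spatial shift $k$. The dictionary $\mathbf{D}_i\in\mathbb{R}^{Nm_{i-1}\times Nm_i}$ is a (stride) convolutional dictionary: it has $m_i$ local filters of length $n_{i-1}m_{i-1}$, and its column indexed $km_i+r$ is filter $r$ placed (cyclically) on entries $km_{i-1},\dots,km_{i-1}+n_{i-1}m_{i-1}-1$ of an $\mathbb{R}^{Nm_{i-1}}$ vector and zero elsewhere (for $i=1$ this is an ordinary convolutional dictionary with filters of length $n_0$). All columns (atoms) have unit $\ell_2$ norm. The mutual coherence is $\mu(\mathbf{D})=\max_{i\ne j}|\mathbf{d}_i^T\mathbf{d}_j|$ over distinct columns. Stripes: for $i\ge1$, the $j$-th stripe $\mathbf{S}_{i,j}\boldsymbol{\Gamma}_i$ is the subvector of $\boldsymbol{\Gamma}_i$ of length $(2n_{i-1}-1)m_i$ consisting of the coefficients at spatial shifts $k\in\{j-n_{i-1}+1,\dots,j+n_{i-1}-1\}$ (mod $N$), all channels, i.e. the coefficients of all atoms of $\mathbf{D}_i$ overlapping the $j$-th length-$n_{i-1}m_{i-1}$ patch of $\boldsymbol{\Gamma}_{i-1}$. Define $\|\boldsymbol{\Gamma}_i\|_{0,\infty}^{s}=\max_j\|\mathbf{S}_{i,j}\boldsymbol{\Gamma}_i\|_0$.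 Deep coding problem $\mathrm{DCP}_{\boldsymbol\lambda}$: given $\mathbf{X}$, $\{\mathbf{D}_i\}$ and $\boldsymbol\lambda=(\lambda_1,\dots,\lambda_K)$, find $\{\boldsymbol{\Gamma}_i\}_{i=1}^K$ such that $\boldsymbol{\Gamma}_{i-1}=\mathbf{D}_i\boldsymbol{\Gamma}_i$ and $\|\boldsymbol{\Gamma}_i\|_{0,\infty}^{s}\le\lambda_i$ for all $1\le i\le K$ (with $\boldsymbol{\Gamma}_0=\mathbf{X}$). *)

(* Defs.v *)
From HB Require Import structures.
From mathcomp Require Import all_boot all_order all_algebra.
Set Implicit Arguments. Unset Strict Implicit. Unset Printing Implicit Defensive.
Import Order.TTheory GRing.Theory Num.Theory.
Local Open Scope ring_scope.

(* Stride convolutional dictionary D in R^{(N*mp) x (N*mi)} built from mi local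
   filters of length np*mp: filter r is the function j |-> f r j (j < np*mp).
   Column c = k*mi + r is filter r placed cyclically on entries
   k*mp, ..., k*mp + np*mp - 1, zero elsewhere (assumes np <= N). *)
Definition convdict (R : nzRingType) (N mp mi np : nat) (f : nat -> nat -> R)
  : 'M[R]_(N * mp, N * mi) :=
  \matrix_(p < N * mp, c < N * mi)
    (let k := (c %/ mi)%N in
     let r := (c %% mi)%N in
     let off := ((p + N * mp - k * mp) %% (N * mp))%N in
     if (off < np * mp)%N then f r off else 0).

Definition unit_atoms (R : nzRingType) (a b : nat) (D : 'M[R]_(a, b)) : Prop :=
  forall c : 'I_b, \sum_(p < a) D p c ^+ 2 = 1.

Definition coherence (R : realDomainType) (a b : nat) (D : 'M[R]_(a, b)) : R :=
  \big[Num.max/0]_(i < b) \big[Num.max/0]_(j < b | j != i)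
     `|\sum_(p < a) D p i * D p j|.

(* ||S_{j} g||_0 : number of nonzeros of the j-th stripe, i.e. of the
   coefficients at spatial shifts j-np+1, ..., j+np-1 (mod N), all mi channels
   (entry k*mi + r is filter r at shift k). *)
Definition stripe_l0 (R : nzRingType) (N mi np : nat) (g : 'cV[R]_(N * mi)) (j : nat)
  : nat :=
  \sum_(t < (2 * np).-1)
     \sum_(c < N * mi | (c %/ mi == (j + t + N + 1 - np) %% N)%N) (g c ord0 != 0)%R.

Definition stripe_norm (R : nzRingType) (N mi np : nat) (g : 'cV[R]_(N * mi)) : nat :=
  \max_(j < N) stripe_l0 np g j.

(* The bound  x < (1 + 1/mu)/2  with the convention 1/0 = +infinity,
   written without division: mu * (2x - 1) < 1  (equivalent for mu > 0,
   and always true for mu = 0). *)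
Definition below_coh_bound (R : realDomainType) (mu x : R) : Prop :=
  mu * (2 * x - 1) < 1.

(* Gam solves DCP_lambda for X (layers 1..K): Gam_0 = X, Gam_{i-1} = D_i Gam_i,
   ||Gam_i||^s_{0,infty} <= lambda_i. Layer i has m i channels and uses
   filters of spatial length n (i-1). *)
Definition DCP (R : realDomainType) (N K : nat) (m n : nat -> nat)
  (D : forall i : nat, 'M[R]_(N * m i.-1, N * m i)) (lam : nat -> R)
  (X : 'cV[R]_(N * m 0%N)) (Gam : forall i : nat, 'cV[R]_(N * m i)) : Prop :=
  Gam 0%N = X /\
  forall i : nat, (1 <= i <= K)%N ->
    Gam i.-1 = D i *m Gam i /\ (stripe_norm (n i.-1) (Gam i))%:R <= lam i.

(* Main.v *)
Require Import Defs.
From HB Require Import structures.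
From mathcomp Require Import all_boot all_order all_algebra.
From mathcomp Require Import zify ring lra.
Import Order.TTheory GRing.Theory Num.Theory.
Local Open Scope ring_scope.

Lemma off_eq (N mp p k : nat) : (0 < mp)%N -> (p < N * mp)%N -> (k <= N)%N ->
  ((p + N * mp - k * mp) %% (N * mp) = ((p %/ mp + N - k) %% N) * mp + p %% mp)%N.
Proof.
move=> mp0 pN kN.
have N0 : (0 < N)%N by case: (N) pN => //; rewrite mul0n.
have hp := divn_eq p mp.
set q := (p %/ mp)%N in hp *; set r := (p %% mp)%N in hp *.
have rlt : (r < mp)%N by rewrite ltn_mod.
have kmp : (k * mp <= N * mp)%N by rewrite leq_mul2r kN orbT.
have -> : (p + N * mp - k * mp = (q + N - k) * mp + r)%N.
  rewrite hp mulnBl mulnDl; move: kmp; clearbody q r; clear; lia.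
set x := (q + N - k)%N.
rewrite {1}(divn_eq x N) mulnDl -addnA -mulnA modnMDl modn_small //.
apply: (@leq_trans ((x %% N).+1 * mp)); first by rewrite mulSn; move: rlt; clearbody r; clear; move: (x %% N * mp)%N => z; lia.
by rewrite leq_mul2r ltn_pmod // orbT.
Qed.

Lemma modarg (N q k k' : nat) : (0 < N)%N -> (k <= N)%N -> (k' < N)%N ->
  k' = ((k + (q + N - k) %% N + (N - (q + N - k') %% N)) %% N)%N.
Proof.
move=> N0 kN k'N.
apply/eqP; rewrite -{1}(modn_small k'N).
rewrite -(eqn_modDr ((q + N - k') %% N)).
have u'lt : ((q + N - k') %% N < N)%N by rewrite ltn_pmod.
have -> : (k + (q + N - k) %% N + (N - (q + N - k') %% N) + (q + N - k') %% N
          = k + (q + N - k) %% N + N)%N.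
  by move: u'lt; move: ((q + N - k') %% N)%N ((q + N - k) %% N)%N => a b; clear; lia.
rewrite modnDr modnDmr modnDmr.
have -> : (k' + (q + N - k') = q + N)%N by move: k'N; clear; lia.
by have -> : (k + (q + N - k) = q + N)%N by move: kN; clear; lia.
Qed.

Definition in_stripe (N mi np k c : nat) : bool :=
  [exists t : 'I_(2 * np).-1, (c %/ mi == (k + t + N + 1 - np) %% N)%N].

Lemma overlap (R : nzRingType) N mp mi np (f : nat -> nat -> R) (p : 'I_(N*mp))
  (c c' : 'I_(N*mi)) :
  convdict N mp mi np f p c != 0 -> convdict N mp mi np f p c' != 0 ->
  in_stripe N mi np (c %/ mi) c'.
Proof.
rewrite !mxE /=.
case: ifP => H1; last by rewrite eqxx.
move=> _; case: ifP => H2; last by rewrite eqxx.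
move=> _.
have pN := ltn_ord p; have cN := ltn_ord c; have c'N := ltn_ord c'.
have /andP[N0 mp0] : (0 < N)%N && (0 < mp)%N by rewrite -muln_gt0; apply: leq_ltn_trans pN.
have /andP[_ mi0] : (0 < N)%N && (0 < mi)%N by rewrite -muln_gt0; apply: leq_ltn_trans cN.
have kN : (c %/ mi < N)%N by rewrite ltn_divLR.
have k'N : (c' %/ mi < N)%N by rewrite ltn_divLR.
rewrite (@off_eq N mp p (c %/ mi) mp0 pN (ltnW kN)) in H1.
rewrite (@off_eq N mp p (c' %/ mi) mp0 pN (ltnW k'N)) in H2.
set q := (p %/ mp)%N in H1 H2.
set u := ((q + N - c %/ mi) %% N)%N in H1.
set u' := ((q + N - c' %/ mi) %% N)%N in H2.
have ult : (u < np)%N.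
  have : (u * mp < np * mp)%N by apply: leq_ltn_trans H1; apply: leq_addr.
  by rewrite ltn_mul2r => /andP[].
have u'lt : (u' < np)%N.
  have : (u' * mp < np * mp)%N by apply: leq_ltn_trans H2; apply: leq_addr.
  by rewrite ltn_mul2r => /andP[].
have u'N : (u' < N)%N by rewrite ltn_pmod.
have tlt : (u + (np.-1 - u') < (2 * np).-1)%N by move: ult u'lt; clearbody u u'; clear; lia.
apply/existsP; exists (Ordinal tlt) => /=.
have -> : (c %/ mi + (u + (np.-1 - u')) + N + 1 - np = c %/ mi + u + (N - u'))%N by move: ult u'lt u'N; clearbody u u'; move: (c %/ mi)%N => kk; clear; lia.
by apply/eqP; apply: modarg => //; apply: ltnW.
Qed.

Lemma bigmax_ge_seq (R : realDomainType) (I : eqType) (r : seq I) (P : pred I) (F : I -> R) x :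
  x \in r -> P x -> F x <= \big[Num.max/0]_(i <- r | P i) F i.
Proof.
elim: r => // y r IH; rewrite inE big_cons; case/orP => [/eqP-> Px | xr Px].
  by rewrite Px le_max lexx.
case: ifP => _; last exact: IH.
by rewrite le_max IH ?orbT.
Qed.

Lemma bigmax_ge (R : realDomainType) (I : finType) (P : pred I) (F : I -> R) x :
  P x -> F x <= \big[Num.max/0]_(i | P i) F i.
Proof. by move=> Px; apply: bigmax_ge_seq => //; rewrite mem_index_enum. Qed.

Lemma bigmax_ge0 (R : realDomainType) (I : finType) (P : pred I) (F : I -> R) :
  0 <= \big[Num.max/0]_(i | P i) F i.
Proof. by elim/big_rec: _ => // i y _ Hy; rewrite le_max Hy orbT. Qed.

Lemma coh_ge (R : realDomainType) a b (D : 'M[R]_(a, b)) (i j : 'I_b) :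
  j != i -> `|\sum_(p < a) D p i * D p j| <= coherence D.
Proof.
move=> ji; rewrite /coherence.
apply: le_trans (@bigmax_ge _ _ xpredT (fun i => \big[Num.max/0]_(j < b | j != i) `|\sum_(p < a) D p i * D p j|) i isT).
exact: (@bigmax_ge _ _ (fun j => j != i) (fun j => `|\sum_(p < a) D p i * D p j|) j ji).
Qed.

Lemma coh_ge0 (R : realDomainType) a b (D : 'M[R]_(a, b)) : 0 <= coherence D.
Proof. exact: bigmax_ge0. Qed.

Lemma sum_neq0 (R : nzRingType) (I : finType) (F : I -> R) :
  \sum_i F i != 0 -> exists i, F i != 0.
Proof.
move=> H; apply/existsP; apply: contraNT H; rewrite negb_exists => /forallP H.
by rewrite big1 // => i _; apply/eqP; move: (H i); rewrite negbK.
Qed.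

Lemma cnt_le (R : nzRingType) N mi np (g : 'cV[R]_(N * mi)) k :
  (\sum_(c < N * mi) (in_stripe N mi np k c && (g c ord0 != 0%R)) <= stripe_l0 np g k)%N.
Proof.
rewrite /stripe_l0.
under [X in (_ <= X)%N]eq_bigr => t _ do rewrite big_mkcond /=.
rewrite exchange_big /=; apply: leq_sum => c _.
case: (boolP (g c ord0 != 0)) => gc; last by rewrite andbF.
rewrite andbT /in_stripe; case: existsP => // [[t Pt]].
by rewrite (bigD1 t) //= Pt.
Qed.

Lemma l0_sub (R : nzRingType) N mi np (g1 g2 : 'cV[R]_(N * mi)) k :
  (stripe_l0 np (g1 - g2) k <= stripe_l0 np g1 k + stripe_l0 np g2 k)%N.
Proof.
rewrite /stripe_l0 -big_split /=; apply: leq_sum => t _.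
rewrite -big_split /=; apply: leq_sum => c _.
rewrite !mxE; have [->|h1] := eqVneq (g1 c ord0) 0; have [->|h2] := eqVneq (g2 c ord0) 0;
  rewrite ?subrr ?eqxx ?h1 ?h2 //=; by case: (_ != _).
Qed.

Lemma l0_le_norm (R : nzRingType) N mi np (g : 'cV[R]_(N * mi)) k :
  (k < N)%N -> (stripe_l0 np g k <= stripe_norm np g)%N.
Proof.
move=> kN; rewrite /stripe_norm.
exact: (@bigop.leq_bigmax _ (fun j : 'I_N => stripe_l0 np g j) (Ordinal kN)).
Qed.

Lemma layer_unique (R : realFieldType) N mp mi np (f : nat -> nat -> R)
  (g1 g2 : 'cV[R]_(N * mi)) :
  unit_atoms (convdict N mp mi np f) ->
  convdict N mp mi np f *m g1 = convdict N mp mi np f *m g2 ->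
  coherence (convdict N mp mi np f) * (2 * (stripe_norm np g1)%:R - 1) < 1 ->
  coherence (convdict N mp mi np f) * (2 * (stripe_norm np g2)%:R - 1) < 1 ->
  g1 = g2.
Proof.
set D := convdict N mp mi np f => ua eqD h1 h2.
set mu := coherence D.
have mu0 : 0 <= mu := @coh_ge0 _ _ _ D.
set dm := g1 - g2.
pose d := fun c : 'I_(N * mi) => (dm c ord0 : R).
case: (boolP [forall c, d c == 0]) => [/forallP H0 | ].
  apply/colP => c; apply/eqP; rewrite -subr_eq0.
  by move: (H0 c); rewrite /d /dm !mxE.
rewrite negb_forall => /existsP[c1 Hc1].
pose cm := Order.arg_max c1 xpredT (fun c => `|d c|).
have Hmax : forall c, `|d c| <= `|d cm|.
  by move=> c; rewrite /cm; case: arg_maxP => // i _ H; apply: H.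
have dcm : d cm != 0.
  by rewrite -normr_gt0; apply: lt_le_trans (Hmax c1); rewrite normr_gt0.
pose G := fun i j : 'I_(N * mi) => \sum_(p < N * mp) D p i * D p j.
have rowz : forall p, \sum_c D p c * d c = 0.
  move=> p; have E : (D *m g1) p ord0 = (D *m g2) p ord0 by rewrite eqD.
  move: E; rewrite ![(D *m _) _ _]mxE => E.
  have dE : forall c, d c = g1 c ord0 - g2 c ord0 by move=> c; rewrite /d /dm !mxE.
  under eq_bigr => c _ do rewrite dE mulrBr.
  by rewrite sumrB E subrr.
have key : \sum_c G cm c * d c = 0.
  rewrite /G.
  under eq_bigr => c _ do rewrite mulr_suml.
  rewrite exchange_big /=.
  apply: big1 => p _.
  under eq_bigr => c _ do rewrite -mulrA.
  by rewrite -mulr_sumr rowz mulr0.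
have Gcc : G cm cm = 1.
  by rewrite /G -(ua cm); apply: eq_bigr => p _; rewrite expr2.
rewrite (bigD1 cm) //= Gcc mul1r in key.
have ineq : `|d cm| <= \sum_(c | c != cm) `|G cm c| * `|d c|.
  have -> : d cm = - \sum_(c | c != cm) G cm c * d c.
    by apply/eqP; rewrite -addr_eq0 key.
  rewrite normrN; apply: le_trans (ler_norm_sum _ _ _) _.
  by apply: ler_sum => c _; rewrite normrM.
set k := (cm %/ mi)%N.
pose P := fun c : 'I_(N * mi) => in_stripe N mi np k c && (d c != 0).
have term : forall c, c != cm -> `|G cm c| * `|d c| <= mu * `|d cm| * (P c)%:R.
  move=> c ccm; rewrite /P.
  case: (boolP (d c != 0)) => dc; last first.
    by move: dc; rewrite negbK => /eqP->; rewrite normr0 mulr0 andbF mulr0.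
  case: (boolP (in_stripe N mi np k c)) => ins.
    rewrite mulr1; apply: ler_pM => //; first exact: coh_ge.
  have -> : G cm c = 0.
    apply/eqP; apply: contraNT ins => /sum_neq0 [p].
    rewrite mulf_eq0 negb_or => /andP[a b]; exact: (@overlap _ _ _ _ _ _ p _ _ a b).
  by rewrite normr0 mul0r /= mulr0.
have ineq2 : `|d cm| <= mu * `|d cm| * (\sum_(c | c != cm) P c)%:R.
  apply: le_trans ineq _; rewrite natr_sum mulr_sumr; exact: ler_sum.
set s := (\sum_(c | c != cm) P c)%N in ineq2.
have Pcm : P cm.
  rewrite /P dcm andbT.
  have /sum_neq0 [p] : G cm cm != 0 by rewrite Gcc oner_neq0.
  by rewrite mulf_eq0 negb_or => /andP[a _]; exact: (@overlap _ _ _ _ _ _ p _ _ a a).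
have cnt : (s.+1 <= stripe_norm np g1 + stripe_norm np g2)%N.
  have -> : s.+1 = (\sum_c P c)%N by rewrite (bigD1 cm) //= Pcm.
  have cmN : (k < N)%N.
    have cN := ltn_ord cm.
    have /andP[_ mi0] : (0 < N)%N && (0 < mi)%N by rewrite -muln_gt0; apply: leq_ltn_trans cN.
    by rewrite ltn_divLR.
  apply: leq_trans (@cnt_le _ _ _ np dm k) _.
  apply: leq_trans (@l0_sub _ _ _ np g1 g2 k) _.
  by apply: leq_add; apply: l0_le_norm.
have one : 1 <= mu * s%:R.
  have pos : 0 < `|d cm| by rewrite normr_gt0.
  by rewrite -(ler_pM2r pos) mul1r mulrAC.
have cntR : s%:R + 1 <= (stripe_norm np g1)%:R + (stripe_norm np g2)%:R :> R.
  by rewrite natr1 -natrD ler_nat.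
move: h1 h2 one cntR mu0; rewrite -/D -/mu.
set a := (stripe_norm np g1)%:R; set b := (stripe_norm np g2)%:R; set sr := s%:R.
move=> h1 h2 one cntR mu0.
have : mu * (sr + 1) <= mu * (a + b) by apply: ler_wpM2l.
clearbody a b sr mu; move=> H; clear -H h1 h2 one mu0.
exfalso; nra.
Qed.

Theorem theorem1 (R : realFieldType) (N K : nat) (m n : nat -> nat)
  (filt : nat -> nat -> nat -> R)
  (D : forall i : nat, 'M[R]_(N * m i.-1, N * m i))
  (lam : nat -> R) (X : 'cV[R]_(N * m 0%N))
  (Gam : forall i : nat, 'cV[R]_(N * m i)) :
  (0 < N)%N ->
  m 0%N = 1%N ->
  (forall i : nat, (1 <= i <= K)%N -> (0 < n i.-1 <= N)%N) ->
  (forall i : nat, (1 <= i <= K)%N ->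
     D i = convdict N (m i.-1) (m i) (n i.-1) (filt i) /\ unit_atoms (D i)) ->
  Gam 0%N = X ->
  (forall i : nat, (1 <= i <= K)%N -> Gam i.-1 = D i *m Gam i) ->
  (forall i : nat, (1 <= i <= K)%N ->
     below_coh_bound (coherence (D i)) (stripe_norm (n i.-1) (Gam i))%:R) ->
  (forall i : nat, (1 <= i <= K)%N ->
     (stripe_norm (n i.-1) (Gam i))%:R <= lam i /\
     below_coh_bound (coherence (D i)) (lam i)) ->
  @DCP R N K m n D lam X Gam /\
  (forall Gam' : forall i : nat, 'cV[R]_(N * m i),
     @DCP R N K m n D lam X Gam' ->
     forall i : nat, (1 <= i <= K)%N -> Gam' i = Gam i).
Proof.
move=> N0 m0 hn hD hG0 hG hcoh hlam.
split.
  split=> // i hi; split; [exact: hG | exact: (hlam i hi).1].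
move=> Gam' [h0' h'].
have main : forall i, (i <= K)%N -> Gam' i = Gam i.
  elim=> [|i IH] hi; first by rewrite h0' hG0.
  have hi1 : (1 <= i.+1 <= K)%N by rewrite hi.
  have [E1 B1] := h' _ hi1.
  have [Dd ua] := hD _ hi1.
  have e : D i.+1 *m Gam i.+1 = D i.+1 *m Gam' i.+1.
    by rewrite -(hG _ hi1) -E1 IH // ltnW.
  have c1 := hcoh _ hi1.
  have [_ c2] := hlam _ hi1.
  have mu0 : 0 <= coherence (D i.+1) := @coh_ge0 _ _ _ _.
  have c2' : coherence (D i.+1) * (2 * (stripe_norm (n i) (Gam' i.+1))%:R - 1) < 1.
    apply: le_lt_trans c2; apply: ler_wpM2l => //.
    move: B1; clear; move: (lam i.+1) => l; move: (_%:R) => x; lra.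
  move: ua e c1 c2'; rewrite /below_coh_bound /= Dd => ua e c1 c2'.
  by apply: esym; apply: (@layer_unique _ _ _ _ _ _ _ _ ua e c1 c2').
by move=> i /andP[_ hi]; exact: main.
Qed.
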